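(* The Bergman projection $P$ on the bidisc $\mathbb{D}^2$ is not of weak-type $(1,1)$: there is no constant $C>0$ such that for all bounded measurable functions $f$ on $\mathbb{D}^2$ and all $\lambda>0$, $$\left|\{(z_1,z_2)\in\mathbb{D}^2 : |P(f)(z_1,z_2)|>\lambda\}\right| \le \frac{C\,\|f\|_{L^1(\mathbb{D}^2)}}{\lambda}.$$
   Context: $\mathbb{D}$ is the unit disc in $\mathbb{C}$, $\mathbb{D}^2=\mathbb{D}\times\mathbb{D}$, $dV$ is Lebesgue measure and $|U|$ denotes the Lebesgue measure of a set $U$. The Bergman projection on $\mathbb{D}^2$ is the orthogonal projection of $L^2(\mathbb{D}^2)$ onto the closed subspace of square-integrable holomorphic functions; it is given by $P(f)(z)=\int_{\mathbb{D}^2}K_{\mathbb{D}^2}(z;\bar w)f(w)\,dV(w)$ with $K_{\mathbb{D}^2}(z;\bar w)=\prod_{j=1}^2\frac{1}{\pi(1-z_j\bar w_j)^2}$. *)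

(* Defs.v *)
From HB Require Import structures.
From mathcomp Require Import all_boot all_order all_algebra.
From mathcomp Require Import all_classical all_reals all_analysis.
From mathcomp Require Import complex.
Set Implicit Arguments. Unset Strict Implicit. Unset Printing Implicit Defensive.
Import Order.TTheory GRing.Theory Num.Theory.
Local Open Scope classical_set_scope.
Local Open Scope ring_scope.

(* A point of C^2 = R^4 is (((x1, y1), x2), y2), standing for
   (z1, z2) = (x1 + i y1, x2 + i y2). *)
Notation C2pt R := (((measurableTypeR R * measurableTypeR R) *
                      measurableTypeR R) * measurableTypeR R)%type.

Section Bidisc.
Variable R : realType.

Local Notation leb1 := (@lebesgue_measure R).
Definition leb4 : {measure set (C2pt R) -> \bar R} :=
  (((leb1 \x leb1) \x leb1) \x leb1)%E.

Definition z1 (p : C2pt R) : R[i] := (p.1.1.1 +i* p.1.1.2)%C.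
Definition z2 (p : C2pt R) : R[i] := (p.1.2 +i* p.2)%C.

Definition cabs (z : R[i]) : R := Num.sqrt (complex.Re z ^+ 2 + complex.Im z ^+ 2).

Definition in_disc (z : R[i]) : Prop := cabs z < 1.
Definition bidisc : set (C2pt R) := [set p | in_disc (z1 p) /\ in_disc (z2 p)].

Definition bergman_kernel (z w : C2pt R) : R[i] :=
  ((pi%:C * (1 - z1 z * (z1 w)^*) ^+ 2)^-1 *
   (pi%:C * (1 - z2 z * (z2 w)^*) ^+ 2)^-1)%C.

Definition Cintegral (D : set (C2pt R)) (g : C2pt R -> R[i]) : R[i] :=
  (Rintegral leb4 D (fun w => complex.Re (g w)) +i* Rintegral leb4 D (fun w => complex.Im (g w)))%C.

Definition bergman_proj (f : C2pt R -> R[i]) (z : C2pt R) : R[i] :=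
  Cintegral bidisc (fun w => bergman_kernel z w * f w).

Definition L1norm (f : C2pt R -> R[i]) : \bar R :=
  (\int[leb4]_(w in bidisc) (cabs (f w))%:E)%E.

End Bidisc.

Arguments bidisc R : clear implicits.

(* Main.v *)
Require Import Defs.
From HB Require Import structures.
From mathcomp Require Import all_boot all_order all_algebra.
From mathcomp Require Import all_classical all_reals all_analysis.
From mathcomp Require Import complex.
From mathcomp Require Import ring lra measurable_realfun.
Import Order.TTheory GRing.Theory Num.Theory.
Local Open Scope classical_set_scope.
Local Open Scope ring_scope.

Module BergLib.
Local Open Scope classical_set_scope.
Local Open Scope ring_scope.
Local Open Scope complex_scope.


Lemma ge0_le_integralT_gen d (T : measurableType d) (R : realType)
  (mu : {measure set T -> \bar R}) (f g : T -> \bar R) :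
  (forall x, (0 <= f x)%E) -> (forall x, (f x <= g x)%E) ->
  (\int[mu]_x f x <= \int[mu]_x g x)%E.
Proof.
move=> f0 fg; have g0 x : (0 <= g x)%E by apply: le_trans (fg x).
rewrite !ge0_integralTE//; apply: ereal_sup_le => _ [h hf <-]; exists h => //.
by move=> x; exact: le_trans (hf x) (fg x).
Qed.

Lemma leb1_mono (R : realType) (A B : set R) : A `<=` B ->
  (@lebesgue_measure R A <= lebesgue_measure B)%E.
Proof.
move=> AB.
rewrite /lebesgue_measure /lebesgue_stieltjes_measure /measure_extension.
match goal with |- is_true (@Order.le _ _ (@mu_ext ?d ?T ?R ?mu _) _) => exact: (@le_mu_ext d T R mu A B AB) end.
Qed.
Lemma pm1_mono d1 d2 (T1 : measurableType d1) (T2 : measurableType d2) (R : realType)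
  (m1 : {measure set T1 -> \bar R}) (m2 : {measure set T2 -> \bar R}) :
  (forall A B, A `<=` B -> (m2 A <= m2 B)%E) ->
  forall A B, A `<=` B -> ((m1 \x m2)%E A <= (m1 \x m2)%E B)%E.
Proof.
move=> m2mono A B AB; rewrite /product_measure1.
apply: ge0_le_integralT_gen => x /=; first exact: measure_ge0.
by apply: m2mono => y; rewrite /xsection /= !inE; exact: AB.
Qed.

Lemma leb4_mono (R : realType) (A B : set (C2pt R)) : A `<=` B ->
  (leb4 R A <= leb4 R B)%E.
Proof.
move=> AB.
have := @pm1_mono _ _ _ _ R ((@lebesgue_measure R \x @lebesgue_measure R) \x @lebesgue_measure R)%E (@lebesgue_measure R) (@leb1_mono R) A B AB.
exact.
Qed.
Definition box (R : realType) (I1 J1 I2 J2 : set (measurableTypeR R)) : set (C2pt R) :=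
  ((I1 `*` J1) `*` I2) `*` J2.

Arguments box {R}.
Lemma leb4_box (R : realType) (I1 J1 I2 J2 : set (measurableTypeR R)) :
  measurable I1 -> measurable J1 -> measurable I2 -> measurable J2 ->
  leb4 R (box I1 J1 I2 J2) =
  (@lebesgue_measure R I1 * @lebesgue_measure R J1 * @lebesgue_measure R I2 * @lebesgue_measure R J2)%E.
Proof.
move=> m1 m2 m3 m4; rewrite /box.
have m12 : measurable (I1 `*` J1) by apply: measurableX.
have m123 : measurable ((I1 `*` J1) `*` I2) by apply: measurableX.
have h1 := @product_measure1E _ _ _ _ R (((@lebesgue_measure R) \x (@lebesgue_measure R)) \x (@lebesgue_measure R))%E (@lebesgue_measure R) ((I1 `*` J1) `*` I2) J2 m123 m4.
apply: (etrans h1); congr (_ * _)%E.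
have h2 := @product_measure1E _ _ _ _ R ((@lebesgue_measure R) \x (@lebesgue_measure R))%E (@lebesgue_measure R) (I1 `*` J1) I2 m12 m3.
apply: (etrans h2); congr (_ * _)%E.
exact: product_measure1E.
Qed.

Lemma leb_itv (R : realType) (a b : R) : a <= b ->
  (@lebesgue_measure R (`[a, b]%classic : set (measurableTypeR R)) = (b - a)%:E)%E.
Proof.
move=> ab; rewrite lebesgue_measure_itv /= lte_fin.
have [ab'|ba] := ltP a b; first by rewrite -EFinD.
have -> : b = a by apply/eqP; rewrite eq_le ab ba.
by rewrite subrr.
Qed.

Lemma leb_itvco (R : realType) (a b : R) : a <= b ->
  (@lebesgue_measure R (`[a, b[%classic : set (measurableTypeR R)) = (b - a)%:E)%E.
Proof.
move=> ab; rewrite lebesgue_measure_itv /= lte_fin.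
have [ab'|ba] := ltP a b; first by rewrite -EFinD.
have -> : b = a by apply/eqP; rewrite eq_le ab ba.
by rewrite subrr.
Qed.
Lemma pq_bounds (R : realType) (a b c d : R) : 0 < a -> 0 < c ->
  -a <= 8*b <= a -> -c <= 8*d <= c ->
  63 * (a*c) <= 64 * (a*c - b*d) /\ 64 * (a*c - b*d) <= 65 * (a*c) /\
  4 * (a*d + b*c)^+2 <= (a*c - b*d)^+2.
Proof.
move=> a0 c0 /andP[b1 b2] /andP[d1 d2].
have h1 : 0 <= (a - 8*b) * (c - 8*d) by apply: mulr_ge0; lra.
have h2 : 0 <= (a + 8*b) * (c + 8*d) by apply: mulr_ge0; lra.
have h3 : 0 <= (a - 8*b) * (c + 8*d) by apply: mulr_ge0; lra.
have h4 : 0 <= (a + 8*b) * (c - 8*d) by apply: mulr_ge0; lra.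
have bd1 : 64 * (b*d) <= a*c by nra.
have bd2 : - (a*c) <= 64 * (b*d) by nra.
have ad1 : - (a*c) <= 8*(a*d) <= a*c by apply/andP; split; nra.
have bc1 : - (a*c) <= 8*(b*c) <= a*c by apply/andP; split; nra.
case/andP: ad1 => ad1 ad2; case/andP: bc1 => bc1 bc2.
split; first lra. split; first lra.
set s := a*d + b*c; set p := a*c - b*d.
have hs1 : - (a*c) <= 4 * s <= a*c by apply/andP; split; rewrite /s; lra.
have hp : 63 * (a*c) <= 64 * p by rewrite /p; lra.
case/andP: hs1 => hs1 hs2.
have : 0 <= a * c by nra.
nra.
Qed.
Lemma V_bounds (R : realType) (k p s A : R) : 0 < k -> 0 < A -> 63 * A <= 64 * p -> 64 * p <= 65 * A ->
  4 * s^+2 <= p^+2 ->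
  2 / (5 * k^+2 * A^+2) <= (k^+2 * (p^+2 - s^+2)) / ((k^+2 * (p^+2 - s^+2))^+2 + (k^+2 * (2 * p * s))^+2)
  /\ (k^+2 * (p^+2 - s^+2)) / ((k^+2 * (p^+2 - s^+2))^+2 + (k^+2 * (2 * p * s))^+2) <= 2 / (k^+2 * A^+2).
Proof.
move=> k0 A0 hp1 hp2 hs.
have p0 : 0 < p by lra.
have q0 : 0 < p^+2 by rewrite exprn_gt0.
have r0 : 0 <= s^+2 by rewrite sqr_ge0.
have k20 : 0 < k^+2 by rewrite exprn_gt0.
have Y0 : 0 < p^+2 + s^+2 by lra.
have -> : (k^+2 * (p^+2 - s^+2)) / ((k^+2 * (p^+2 - s^+2))^+2 + (k^+2 * (2 * p * s))^+2)
   = (p^+2 - s^+2) / (k^+2 * (p^+2 + s^+2)^+2).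
  have eD : (k ^+ 2 * (p ^+ 2 - s ^+ 2)) ^+ 2 + (k ^+ 2 * (2 * p * s)) ^+ 2 =
     k^+2 * (k^+2 * (p^+2 + s^+2)^+2) by ring.
  rewrite eD invfM mulrACA mulfV ?mul1r // gt_eqF //.
have D0 : 0 < k^+2 * (p^+2 + s^+2)^+2 by rewrite mulr_gt0 // exprn_gt0.
have A20 : 0 < A^+2 by rewrite exprn_gt0.
have pA1 : 63^+2 * A^+2 <= 64^+2 * p^+2.
  rewrite -!exprMn; apply: lerXn2r; rewrite ?nnegrE; nra.
have pA2 : 64^+2 * p^+2 <= 65^+2 * A^+2.
  rewrite -!exprMn; apply: lerXn2r; rewrite ?nnegrE; nra.
set q := p^+2 in q0 hs pA1 pA2 Y0 D0 *; set r := s^+2 in r0 hs Y0 D0 *.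
set B := A^+2 in A20 pA1 pA2 *; set K := k^+2 in k20 D0 *.
split.
  rewrite ler_pdivrMr ?mulr_gt0 // ?exprn_gt0 //.
  rewrite mulrAC ler_pdivlMr //.
  have e1 : (q + r)^+2 <= 25/16 * q^+2.
    have : q + r <= 5/4 * q by lra.
    move=> h; have : (q + r)^+2 <= (5/4 * q)^+2 by apply: lerXn2r; rewrite ?nnegrE; lra.
    by rewrite exprMn; lra.
  have e2 : 3/4 * q <= q - r by lra.
  have e3 : 2 * (q + r)^+2 <= 5 * B * (q - r) by nra.
  nra.
rewrite ler_pdivrMr // mulrAC ler_pdivlMr ?mulr_gt0 //.
have e1 : q^+2 <= (q + r)^+2 by apply: lerXn2r; rewrite ?nnegrE; lra.
have e2 : B <= 2 * q by nra.
have e3 : (q - r) * B <= 2 * (q+r)^+2 by nra.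
have := ler_wpM2l (ltW k20) e3.
move=> h.
have -> : (q - r) * (K * B) = K * ((q - r) * B) by ring.
have -> : 2 * (K * (q + r) ^+ 2) = K * (2 * (q + r) ^+ 2) by ring.
exact: h.
Qed.
Lemma geom (R : realType) (al et x y s t : R) : 0 < al -> 2 * al <= 1 -> 0 < et -> 64 * et <= al ->
  1 - 2 * al <= x -> x <= 1 - al -> 0 <= y -> 32 * y <= al ->
  1 - 2 * et <= s -> s <= 1 - et -> 0 <= t -> t <= et ->
  al <= 2 * (1 - (x * s + y * t)) /\ 1 - (x * s + y * t) <= 4 * al /\
  - (1 - (x * s + y * t)) <= 8 * (- (y * s - x * t)) <= 1 - (x * s + y * t).
Proof.
move=> a0 a1 e0 e1 x1 x2 y1 y2 s1 s2 t1 t2.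
have x0 : 0 <= x by lra.
have s0 : 0 <= s by lra.
have xs1 : x * s <= (1 - al) * (1 - et).
  apply: le_trans (ler_wpM2r s0 x2) _; apply: ler_wpM2l; lra.
have xs2 : (1 - 2 * al) * (1 - 2 * et) <= x * s.
  apply: le_trans (ler_wpM2l _ s1) _; first lra; apply: ler_wpM2r; lra.
have yt1 : 0 <= y * t by apply: mulr_ge0.
have yt2 : y * t <= al / 32 * et.
  apply: le_trans (ler_wpM2r t1 (_ : y <= al / 32)) _; first lra.
  apply: ler_wpM2l; lra.
have ys1 : 0 <= y * s by apply: mulr_ge0.
have ys2 : y * s <= y by nra.
have xt1 : 0 <= x * t by apply: mulr_ge0.
have xt2 : x * t <= t by nra.
split; first nra. split; first nra.
apply/andP; split; nra.
Qed.

Lemma in_disc_box (R : realType) (al x y : R) : 0 < al -> 2 * al <= 1 ->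
  1 - 2 * al <= x -> x <= 1 - al -> 0 <= y -> 32 * y <= al -> x^+2 + y^+2 < 1.
Proof.
move=> a0 a1 x1 x2 y1 y2.
have x0 : 0 <= x by lra.
have : x^+2 <= (1 - al)^+2 by apply: lerXn2r; rewrite ?nnegrE; lra.
have : y^+2 <= (al/32)^+2 by apply: lerXn2r; rewrite ?nnegrE; lra.
nra.
Qed.

Lemma ReinvC (R : realType) (Q : R[i]) :
  complex.Re (Q^-1) = complex.Re Q / (complex.Re Q ^+ 2 + complex.Im Q ^+ 2).
Proof. by case: Q => a b. Qed.

Lemma Qform (R : realType) (k a b c d : R) :
  ((k%:C)^+2 * ((a +i* b) * (c +i* d))^+2) =
  (k^+2 * ((a*c - b*d)^+2 - (a*d + b*c)^+2)) +i* (k^+2 * (2 * (a*c - b*d) * (a*d + b*c))).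
Proof.
rewrite !expr2 /=; apply/eqP; rewrite eq_complex /=; apply/andP; split; apply/eqP; ring.
Qed.

Lemma Kform (R : realType) (k : R) (u v : R[i]) :
  (k%:C * u^+2)^-1 * (k%:C * v^+2)^-1 = ((k%:C)^+2 * (u * v)^+2)^-1.
Proof.
rewrite -invfM; congr (_^-1); rewrite exprMn; ring.
Qed.

Arguments geom {R al et x y s t}.
Arguments pq_bounds {R a b c d}.
Arguments V_bounds {R k p s A}.
Arguments in_disc_box {R al x y}.
Lemma ReC (R : realType) (a b : R) : complex.Re (a +i* b) = a. Proof. by []. Qed.
Lemma ImC (R : realType) (a b : R) : complex.Im (a +i* b) = b. Proof. by []. Qed.
Lemma ReKform (R : realType) (k a b c d : R) :
  complex.Re (((k%:C)^+2 * ((a +i* b) * (c +i* d))^+2)^-1) =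
  (k ^+ 2 * ((a * c - b * d) ^+ 2 - (a * d + b * c) ^+ 2)) /
  ((k ^+ 2 * ((a * c - b * d) ^+ 2 - (a * d + b * c) ^+ 2)) ^+ 2 +
   (k ^+ 2 * (2 * (a * c - b * d) * (a * d + b * c))) ^+ 2).
Proof. by rewrite Qform ReinvC. Qed.
Lemma u_form (R : realType) (x y s t : R) :
  (1 - (x +i* y) * (s +i* t)^*) = (1 - (x * s + y * t)) +i* (- (y * s - x * t)).
Proof. apply/eqP; rewrite eq_complex /=; apply/andP; split; apply/eqP; ring. Qed.

Lemma K_bounds (R : realType) (al be h et : R) (p w : C2pt R) :
  0 < al -> 2 * al <= 1 -> 0 < be -> 2 * be <= 1 -> al * be = h -> 64 * et = h ->
  1 - 2 * al <= p.1.1.1 -> p.1.1.1 <= 1 - al -> 0 <= p.1.1.2 -> 32 * p.1.1.2 <= al ->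
  1 - 2 * be <= p.1.2 -> p.1.2 <= 1 - be -> 0 <= p.2 -> 32 * p.2 <= be ->
  1 - 2 * et <= w.1.1.1 -> w.1.1.1 <= 1 - et -> 0 <= w.1.1.2 -> 32 * w.1.1.2 <= et ->
  1 - 2 * et <= w.1.2 -> w.1.2 <= 1 - et -> 0 <= w.2 -> 32 * w.2 <= et ->
  (640 * pi^+2 * h^+2)^-1 <= complex.Re (bergman_kernel p w) <= 32 / (pi^+2 * h^+2).
Proof.
move: p w => p w.
move=> a0 a1 b0 b1 abh eh hx1 hx2 hy1 hy2 hx3 hx4 hy3 hy4 hs1 hs2 ht1 ht2 hs3 hs4 ht3 ht4.
pose a := 1 - (p.1.1.1 * w.1.1.1 + p.1.1.2 * w.1.1.2).
pose b := - (p.1.1.2 * w.1.1.1 - p.1.1.1 * w.1.1.2).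
pose c := 1 - (p.1.2 * w.1.2 + p.2 * w.2).
pose d := - (p.2 * w.1.2 - p.1.2 * w.2).
have -> : complex.Re (bergman_kernel p w) =
  (pi ^+ 2 * ((a * c - b * d) ^+ 2 - (a * d + b * c) ^+ 2)) /
  ((pi ^+ 2 * ((a * c - b * d) ^+ 2 - (a * d + b * c) ^+ 2)) ^+ 2 +
   (pi ^+ 2 * (2 * (a * c - b * d) * (a * d + b * c))) ^+ 2).
  rewrite /bergman_kernel /z1 /z2 !u_form Kform; exact: ReKform.
move: hx1 hx2 hy1 hy2 hx3 hx4 hy3 hy4 hs1 hs2 ht1 ht2 hs3 hs4 ht3 ht4.
rewrite /a /b /c /d; clear a b c d.
move: (p.1.1.1) (p.1.1.2) (p.1.2) (p.2) (w.1.1.1) (w.1.1.2) (w.1.2) (w.2) => x1 y1 x2 y2 s1 t1 s2 t2.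
move=> hx1 hx2 hy1 hy2 hx3 hx4 hy3 hy4 hs1 hs2 ht1 ht2 hs3 hs4 ht3 ht4.
have h0 : 0 < h by rewrite -abh mulr_gt0.
have e0 : 0 < et by lra.
have ea : 64 * et <= al by nra.
have eb : 64 * et <= be by nra.
have ht2' : t1 <= et by lra.
have ht4' : t2 <= et by lra.
have [g1 [g2 /andP[g3 g4]]] := geom a0 a1 e0 ea hx1 hx2 hy1 hy2 hs1 hs2 ht1 ht2'.
have [k1 [k2 /andP[k3 k4]]] := geom b0 b1 e0 eb hx3 hx4 hy3 hy4 hs3 hs4 ht3 ht4'.
set a := 1 - (x1 * s1 + y1 * t1) in g1 g2 g3 g4 *.
set b := - (y1 * s1 - x1 * t1) in g3 g4 *.
set c := 1 - (x2 * s2 + y2 * t2) in k1 k2 k3 k4 *.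
set d := - (y2 * s2 - x2 * t2) in k3 k4 *.
have ap : 0 < a by lra.
have cp : 0 < c by lra.
have [q1 [q2 q3]] := pq_bounds ap cp (introT andP (conj g3 g4)) (introT andP (conj k3 k4)).
have A0 : 0 < a * c by rewrite mulr_gt0.
have [v1 v2] := V_bounds (pi_gt0 R) A0 q1 q2 q3.
move: v1 v2.
set V := (pi ^+ 2 * _) / _ => v1 v2.
set A := a * c in A0 v1 v2 *.
have A1 : A <= 16 * h.
  rewrite /A -abh; have := ler_pM (ltW ap) (ltW cp) g2 k2; lra.
have A2 : h <= 4 * A.
  rewrite /A -abh; have := ler_pM (ltW a0) (ltW b0) g1 k1; lra.
have pi2 : 0 < pi ^+ 2 :> R by rewrite exprn_gt0 // pi_gt0.
have A20 : 0 < A ^+ 2 by rewrite exprn_gt0.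
have h20 : 0 < h ^+ 2 by rewrite exprn_gt0.
have B1 : A ^+ 2 <= 256 * h ^+ 2.
  have : A ^+ 2 <= (16 * h) ^+ 2 by apply: lerXn2r; rewrite ?nnegrE; lra.
  by rewrite exprMn; lra.
have B2 : h ^+ 2 <= 16 * A ^+ 2.
  have : h ^+ 2 <= (4 * A) ^+ 2 by apply: lerXn2r; rewrite ?nnegrE; lra.
  by rewrite exprMn; lra.
apply/andP; split.
  have P1 : 0 < 5 * pi ^+ 2 * A ^+ 2.
    by apply: mulr_gt0; [apply: mulr_gt0; [lra|exact: pi2]|exact: A20].
  have P2 : 0 < 640 * pi ^+ 2 * h ^+ 2.
    by apply: mulr_gt0; [apply: mulr_gt0; [lra|exact: pi2]|exact: h20].
  apply: le_trans v1; rewrite ler_pdivlMr // mulrC ler_pdivrMr //.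
  have := ler_wpM2l (ltW pi2) B1; lra.
have P3 : 0 < pi ^+ 2 * A ^+ 2 by apply: mulr_gt0; [exact: pi2|exact: A20].
have P4 : 0 < pi ^+ 2 * h ^+ 2 by apply: mulr_gt0; [exact: pi2|exact: h20].
apply: le_trans v2 _; rewrite ler_pdivrMr // mulrAC ler_pdivlMr //.
have := ler_wpM2l (ltW pi2) B2; lra.
Qed.


Lemma integral_indicZ (R : realType) (S : set (C2pt R)) (k : R) : measurable S -> 0 <= k ->
  (\int[leb4 R]_w ((k * \1_S w)%:E) = k%:E * leb4 R S)%E.
Proof.
move=> mS k0.
under eq_integral do rewrite EFinM.
rewrite (ge0_integralZl (leb4 R) measurableT).
- by rewrite integral_indic// setIT.
- by apply/measurable_EFinP; exact: measurable_indic.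
- by move=> x _; rewrite lee_fin indicE; case: (_ \in _) => /=; lra.
- by rewrite lee_fin.
Qed.

Lemma Rint_lower (R : realType) (S D : set (C2pt R)) (g : C2pt R -> R) (m M sig : R) :
  measurable S -> 0 <= m -> 0 <= M -> S `<=` D -> leb4 R S = sig%:E ->
  (forall w, S w -> m <= g w <= M) -> (forall w, ~ S w -> g w = 0) ->
  m * sig <= Rintegral (leb4 R) D g.
Proof.
move=> mS m0 M0 SD Ssig gS gN.
have pw w : (0 <= ((fun x => (g x)%:E) \_ D) w /\
    (m * \1_S w)%:E <= ((fun x => (g x)%:E) \_ D) w /\
    ((fun x => (g x)%:E) \_ D) w <= (M * \1_S w)%:E)%E.
  rewrite /patch indicE; case: (boolP (w \in S)) => wS.
    have Dw : w \in D by rewrite inE; apply: SD; rewrite -inE.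
    rewrite Dw !mulr1 !lee_fin; have /andP[g1 g2] := gS w (set_mem wS).
    split; [lra|split; lra].
  rewrite !mulr0; case: ifP => _; last by rewrite lexx.
  rewrite gN; first by rewrite lexx.
  by move=> Sw; move/negP: wS; apply; rewrite inE.
set I := (\int[leb4 R]_(x in D) (g x)%:E)%E.
have I1 : (m%:E * sig%:E <= I)%E.
  rewrite /I integral_mkcond -Ssig -integral_indicZ //.
  by apply: ge0_le_integralT_gen => w; [rewrite lee_fin indicE; case: (_ \in _) => /=; lra|case: (pw w) => _ []].
have I2 : (I <= M%:E * sig%:E)%E.
  rewrite /I integral_mkcond -Ssig -integral_indicZ //.
  apply: ge0_le_integralT_gen => w; first by case: (pw w).
  by case: (pw w) => _ [].
rewrite /Rintegral -/I.
move: I1 I2; clearbody I; case: I => [r| |] /= I1 I2.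
- by rewrite -EFinM lee_fin in I1.
- by rewrite -EFinM leye_eq in I2.
- by rewrite -EFinM leeNy_eq in I1.
Qed.

Lemma cabs_real (R : realType) (x : R) : cabs (x%:C) = `|x|.
Proof. by rewrite /cabs /= expr0n /= addr0 sqrtr_sqr. Qed.

Lemma cabs_ge_Re (R : realType) (z : R[i]) : complex.Re z <= cabs z.
Proof.
rewrite /cabs; apply: le_trans (ler_norm _) _; rewrite -sqrtr_sqr.
by apply: ler_wsqrtr; rewrite lerDl sqr_ge0.
Qed.

Lemma L1_indic (R : realType) (S : set (C2pt R)) : measurable S ->
  (L1norm (fun w => (\1_S w)%:C) <= leb4 R S)%E.
Proof.
move=> mS; rewrite /L1norm integral_mkcond.
rewrite -[leb4 R S]mul1e -integral_indicZ //.
apply: ge0_le_integralT_gen => w.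
  rewrite /patch; case: ifP => _ //; rewrite lee_fin cabs_real; exact: normr_ge0.
rewrite /patch cabs_real indicE; case: (w \in S); case: ifP => _;
  by rewrite ?normr1 ?normr0 ?mul1r ?mulr0 ?lee_fin ?mulr1.
Qed.


Lemma pow2_ge2 (R : realType) (j : nat) : (0 < j)%N -> 2 <= (2:R) ^+ j.
Proof.
move=> j0; rewrite -(prednK j0) exprS.
have : 1 <= (2:R) ^+ j.-1 by rewrite exprn_ege1 // ler1n.
lra.
Qed.

Lemma pow2_facts (R : realType) (j : nat) : (0 < j)%N ->
  0 < ((2:R) ^+ j)^-1 /\ 2 * ((2:R) ^+ j)^-1 <= 1.
Proof.
move=> j0; have p := @pow2_ge2 R j j0.
have p0 : 0 < (2:R) ^+ j by rewrite exprn_gt0.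
split; first by rewrite invr_gt0.
by rewrite mulrC ler_pdivrMl // mulr1.
Qed.

Lemma pow2_mul (R : realType) (j N : nat) : (j <= N)%N ->
  ((2:R) ^+ j)^-1 * ((2:R) ^+ (N - j))^-1 = ((2:R) ^+ N)^-1.
Proof. by move=> jN; rewrite -invfM -exprD subnKC. Qed.

Lemma pow2_lt (R : realType) (i j : nat) : (i < j)%N ->
  2 * ((2:R) ^+ j)^-1 <= ((2:R) ^+ i)^-1.
Proof.
move=> ij.
have -> : ((2:R) ^+ i)^-1 = (2:R) ^+ (j - i) * ((2:R) ^+ j)^-1.
  have e : (2:R) ^+ j = 2 ^+ (j - i) * 2 ^+ i by rewrite -exprD subnK // ltnW.
  by rewrite e invfM mulrA mulfV ?mul1r // expf_neq0.
apply: ler_wpM2r; first by rewrite invr_ge0 exprn_ge0.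
by apply: pow2_ge2; rewrite subn_gt0.
Qed.

Arguments box {R}.

Lemma box_mem_co (R : realType) (a1 b1 a2 b2 a3 b3 a4 b4 : R) (p : C2pt R) :
  box `[a1, b1[%classic `[a2, b2]%classic `[a3, b3]%classic `[a4, b4]%classic p ->
  [/\ a1 <= p.1.1.1 < b1, a2 <= p.1.1.2 <= b2, a3 <= p.1.2 <= b3 & a4 <= p.2 <= b4].
Proof. by rewrite /box /= !in_itv /= => -[[[-> ->] ->] ->]. Qed.

Lemma box_mem_cc (R : realType) (a1 b1 a2 b2 a3 b3 a4 b4 : R) (p : C2pt R) :
  box `[a1, b1]%classic `[a2, b2]%classic `[a3, b3]%classic `[a4, b4]%classic p ->
  [/\ a1 <= p.1.1.1 <= b1, a2 <= p.1.1.2 <= b2, a3 <= p.1.2 <= b3 & a4 <= p.2 <= b4].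
Proof. by rewrite /box /= !in_itv /= => -[[[-> ->] ->] ->]. Qed.

Lemma leb4_B (R : realType) (a b : R) : 0 < a -> 0 < b ->
  leb4 R (box `[1 - 2 * a, 1 - a[%classic `[0, a / 32]%classic
              `[1 - 2 * b, 1 - b]%classic `[0, b / 32]%classic) = ((a * b) ^+ 2 / 1024)%:E.
Proof.
move=> a0 b0.
have i1 : 1 - 2 * a <= 1 - a by lra.
have i2 : 0 <= a / 32 by lra.
have i3 : 1 - 2 * b <= 1 - b by lra.
have i4 : 0 <= b / 32 by lra.
rewrite leb4_box // leb_itvco // !leb_itv //.
by rewrite -!EFinM; congr EFin; field.
Qed.

Lemma ReMC (R : realType) (z : R[i]) (x : R) :
  complex.Re (z * (x%:C)%C) = complex.Re z * x.
Proof. by case: z => a b /=; rewrite mulr0 subr0. Qed.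

Lemma indic1 (R : realType) (T : Type) (A : set T) (x : T) : A x -> \1_A x = 1 :> R.
Proof. by move=> Ax; rewrite indicE mem_set. Qed.

Lemma indic0 (R : realType) (T : Type) (A : set T) (x : T) : ~ A x -> \1_A x = 0 :> R.
Proof. by move=> Ax; rewrite indicE memNset. Qed.

Lemma disc_of_box (R : realType) (al x y : R) : 0 < al -> 2 * al <= 1 ->
  1 - 2 * al <= x -> x <= 1 - al -> 0 <= y -> 32 * y <= al -> in_disc (x +i* y)%C.
Proof.
move=> a0 a1 x1 x2 y1 y2; rewrite /in_disc /cabs /= -sqrtr1 ltr_sqrt ?ltr01 //.
exact: (in_disc_box a0 a1 x1 x2 y1 y2).
Qed.

Lemma half_lt (R : realType) (x : R) : 0 < x -> x / 2 < x.
Proof. move=> x0; lra. Qed.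

Lemma Sbox_disc (R : realType) (et : R) : 0 < et -> 2 * et <= 1 ->
  box `[1 - 2 * et, 1 - et]%classic `[0, et / 32]%classic
      `[1 - 2 * et, 1 - et]%classic `[0, et / 32]%classic `<=` bidisc R.
Proof.
move=> e0 e1 w Sw.
have [/andP[x1 x2] /andP[y1 y2] /andP[x3 x4] /andP[y3 y4]] :=
  @box_mem_cc R _ _ _ _ _ _ _ _ w Sw.
split; rewrite /z1 /z2.
  by apply: (@disc_of_box R et) => //; lra.
by apply: (@disc_of_box R et) => //; lra.
Qed.

Lemma Sbox_meas (R : realType) (et : R) : 0 < et -> 2 * et <= 1 ->
  leb4 R (box `[1 - 2 * et, 1 - et]%classic `[0, et / 32]%classic
      `[1 - 2 * et, 1 - et]%classic `[0, et / 32]%classic) =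
  (et * (et / 32) * et * (et / 32))%:E.
Proof.
move=> e0 e1.
have i1 : 1 - 2 * et <= 1 - et by lra.
have i2 : 0 <= et / 32 by lra.
rewrite leb4_box // !leb_itv //.
by rewrite -!EFinM; congr EFin; ring.
Qed.

Lemma level_box (R : realType) (al be h et lam : R) (p : C2pt R) :
  0 < al -> 2 * al <= 1 -> 0 < be -> 2 * be <= 1 -> al * be = h -> 64 * et = h ->
  lam < (640 * pi ^+ 2 * h ^+ 2)^-1 * (et * (et / 32) * et * (et / 32)) ->
  box `[1 - 2 * al, 1 - al[%classic `[0, al / 32]%classic
      `[1 - 2 * be, 1 - be]%classic `[0, be / 32]%classic p ->
  bidisc R p /\ lam < cabs (bergman_proj (fun w => ((\1_(box `[1 - 2 * et, 1 - et]%classic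
     `[0, et / 32]%classic `[1 - 2 * et, 1 - et]%classic `[0, et / 32]%classic) w)%:C)%C) p).
Proof.
move=> a0 a1 b0 b1 hab et64 lms Bp.
have h0 : 0 < h by rewrite -hab mulr_gt0.
have e0 : 0 < et by lra.
have e1 : 2 * et <= 1 by nra.
have [/andP[x1 x2] /andP[y1 y2] /andP[x3 x4] /andP[y3 y4]] :=
  @box_mem_co R _ _ _ _ _ _ _ _ p Bp.
split.
  split; rewrite /z1 /z2.
    by apply: (@disc_of_box R al) => //; lra.
  by apply: (@disc_of_box R be) => //; lra.
apply: lt_le_trans (cabs_ge_Re _ _).
set S := box _ _ _ _.
have mS : measurable S by rewrite /S /box; do 3 apply: measurableX => //.
have pi20 : 0 < pi ^+ 2 :> R by rewrite exprn_gt0 // pi_gt0.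
have h20 : 0 < h ^+ 2 by exact: exprn_gt0.
have m0 : 0 <= (640 * pi ^+ 2 * h ^+ 2)^-1.
  rewrite invr_ge0; apply: mulr_ge0; [apply: mulr_ge0; [lra | exact: ltW] | exact: ltW].
have M0 : 0 <= 32 / (pi ^+ 2 * h ^+ 2).
  apply: divr_ge0; [lra | apply: mulr_ge0; exact: ltW].
apply: lt_le_trans lms _.
have -> : complex.Re (bergman_proj (fun w => ((\1_S w)%:C)%C) p) =
  Rintegral (leb4 R) (bidisc R) (fun w => complex.Re (bergman_kernel p w * ((\1_S w)%:C)%C)) by [].
apply: (@Rint_lower R S (bidisc R) _ _ _ _ mS m0 M0 (@Sbox_disc R et e0 e1)
   (@Sbox_meas R et e0 e1)).
  move=> w Sw; rewrite ReMC (@indic1 R _ S w Sw) mulr1.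
  have [/andP[s1 s2] /andP[t1 t2] /andP[s3 s4] /andP[t3 t4]] :=
    @box_mem_cc R _ _ _ _ _ _ _ _ w Sw.
  apply: (@K_bounds R al be h et p w a0 a1 b0 b1 hab et64); lra.
by move=> w nSw; rewrite ReMC (@indic0 R _ S w nSw) mulr0.
Qed.

End BergLib.
Import BergLib.


Theorem theorem3p1 (R : realType) :
  ~ (exists C : R, 0 < C /\
      forall f : C2pt R -> R[i],
        measurable_fun (bidisc R) (fun w => complex.Re (f w)) ->
        measurable_fun (bidisc R) (fun w => complex.Im (f w)) ->
        (exists M : R, forall w, bidisc R w -> cabs (f w) <= M) ->
        forall lam : R, 0 < lam ->
          (leb4 R (bidisc R `&` [set z | (lam < cabs (bergman_proj f z))%R])
            <= (C%:E * L1norm f) * (lam^-1)%R%:E)%E).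
Proof.
case=> C [C0 HC].
pose K : R := 1024 * 1280 * C * pi ^+ 2.
have K0 : 0 <= K by apply: mulr_ge0; [apply: mulr_ge0; lra|exact: sqr_ge0].
pose n := Num.bound K.
have Kn : K < n%:R by exact: archi_boundP.
pose N := n.+2.
pose h : R := ((2:R) ^+ N)^-1.
have h0 : 0 < h by rewrite invr_gt0 exprn_gt0.
pose al (j : nat) : R := ((2:R) ^+ j)^-1.
pose be (j : nat) : R := ((2:R) ^+ (N - j))^-1.
pose et : R := h / 64.
have et0 : 0 < et by rewrite /et; lra.
have et1 : 2 * et <= 1.
  have := (@pow2_facts R N (isT : (0 < N)%N)).2; rewrite -/h /et; lra.
pose S : set (C2pt R) := box `[1 - 2 * et, 1 - et]%classic `[0, et / 32]%classic
   `[1 - 2 * et, 1 - et]%classic `[0, et / 32]%classic.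
pose sig : R := et * (et / 32) * et * (et / 32).
have sig0 : 0 < sig by rewrite /sig !mulr_gt0 //; lra.
have mS : measurable S by rewrite /S /box; do 3 apply: measurableX => //.
have Ssig : leb4 R S = sig%:E.
  have i1 : 1 - 2 * et <= 1 - et by lra.
  have i2 : 0 <= et / 32 by lra.
  rewrite /S leb4_box // !leb_itv //.
  by rewrite -!EFinM /sig; congr EFin; ring.
pose f (w : C2pt R) : R[i] := ((\1_S w)%:C)%C.
pose m : R := (640 * pi ^+ 2 * h ^+ 2)^-1.
pose M : R := 32 / (pi ^+ 2 * h ^+ 2).
have pi20 : 0 < pi ^+ 2 :> R by rewrite exprn_gt0 // pi_gt0.
have h20 : 0 < h ^+ 2 by exact: exprn_gt0.
have m0 : 0 < m.
  rewrite /m invr_gt0; apply: mulr_gt0; [apply: mulr_gt0; [lra | exact: pi20] | exact: h20].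
have M0 : 0 < M.
  rewrite /M; apply: divr_gt0; [lra | apply: mulr_gt0; [exact: pi20 | exact: h20]].
pose lam : R := m * sig / 2.
have lam0 : 0 < lam.
  rewrite /lam; apply: divr_gt0; [exact: mulr_gt0 | lra].
pose B (j : nat) : set (C2pt R) := box `[1 - 2 * al j, 1 - al j[%classic `[0, al j / 32]%classic
   `[1 - 2 * be j, 1 - be j]%classic `[0, be j / 32]%classic.
pose U := \big[setU/set0]_(i < n.+1) B i.+1.
have mRe : measurable_fun (bidisc R) (fun w => complex.Re (f w)).
  have -> : (fun w => complex.Re (f w)) = \1_S by apply/funext => w.
  exact: measurable_indic.
have mIm : measurable_fun (bidisc R) (fun w => complex.Im (f w)).
  have -> : (fun w => complex.Im (f w)) = cst 0 by apply/funext => w.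
  exact: measurable_cst.
have bnd : exists M0 : R, forall w, bidisc R w -> cabs (f w) <= M0.
  exists 1 => w _; rewrite /f cabs_real indicE; case: (_ \in _).
    by rewrite normr1.
  by rewrite normr0 ler01.
have hyp := HC f mRe mIm bnd lam lam0.
have L1 : (L1norm f <= sig%:E)%E by rewrite -Ssig; exact: L1_indic.
have L10 : (0 <= L1norm f)%E.
  by apply: integral_ge0 => w _; rewrite lee_fin; exact: sqrtr_ge0.
have alpos j : (0 < j)%N -> 0 < al j /\ 2 * al j <= 1 by move=> j0; exact: pow2_facts.
have bepos j : (j < N)%N -> 0 < be j /\ 2 * be j <= 1.
  by move=> jN; apply: pow2_facts; rewrite subn_gt0.
have albe j : (j <= N)%N -> al j * be j = h by move=> jN; exact: pow2_mul.
have UB : leb4 R U = ((n.+1)%:R * (h ^+ 2 / 1024))%:E.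
  rewrite /U measure_bigsetU_ord.
  - have -> : (\sum_(i < n.+1) leb4 R (B i.+1) = \sum_(i < n.+1) (h ^+ 2 / 1024)%:E)%E.
      apply: eq_bigr => i _.
      have iN : (i.+1 < N)%N by rewrite /N ltnS; exact: ltn_ord.
      have [a0 _] := alpos i.+1 isT.
      have [b0 _] := bepos i.+1 iN.
      by rewrite /B (@leb4_B R _ _ a0 b0) albe // ltnW.
    by rewrite sumEFin sumr_const card_ord mulr_natl.
  - by move=> i; rewrite /B /box; do 3 apply: measurableX => //.
  - move=> i j _ _ [p [Bi Bj]]; apply/val_inj => /=.
    have [/andP[x1 x2] _ _ _] := @box_mem_co R _ _ _ _ _ _ _ _ p Bi.
    have [/andP[y1 y2] _ _ _] := @box_mem_co R _ _ _ _ _ _ _ _ p Bj.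
    case: (ltngtP i j) => // ij; exfalso.
      have := @pow2_lt R i.+1 j.+1 ij; rewrite -/(al i.+1) -/(al j.+1); lra.
    have := @pow2_lt R j.+1 i.+1 ij; rewrite -/(al i.+1) -/(al j.+1); lra.
have et64 : 64 * et = h by rewrite /et; lra.
have lms : lam < m * sig by exact: half_lt (mulr_gt0 m0 sig0).
have Usub : U `<=` bidisc R `&` [set z | lam < cabs (bergman_proj f z)].
  move=> p; rewrite /U -(bigcup_mkord _ (fun k => B k.+1)) => -[i /= iN Bp].
  have iN' : (i.+1 < N)%N by rewrite /N ltnS.
  have [a0 a1] := alpos i.+1 isT.
  have [b0 b1] := bepos i.+1 iN'.
  have hab := albe i.+1 (ltnW iN').
  exact: (@level_box R (al i.+1) (be i.+1) h et lam p a0 a1 b0 b1 hab et64 lms Bp).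
have := le_trans (@leb4_mono R _ _ Usub) hyp.
rewrite UB.
have e1 : (C%:E * L1norm f * (lam^-1)%:E <= (C * sig * lam^-1)%:E)%E.
  rewrite !EFinM; apply: lee_wpmul2r; first by rewrite lee_fin invr_ge0; exact: ltW.
  by apply: lee_wpmul2l => //; rewrite lee_fin; exact: ltW.
move=> /le_trans /(_ e1); rewrite lee_fin.
have -> : C * sig * lam^-1 = 1280 * C * pi ^+ 2 * h ^+ 2.
  rewrite /lam /m; move: pi20; set P := pi ^+ 2 => P0.
  field.
  by rewrite (lt0r_neq0 h0) (lt0r_neq0 P0) (lt0r_neq0 sig0).
move=> hn.
have : (n.+1)%:R <= K.
  move: hn pi20; rewrite /K; set P := pi ^+ 2 => hn P0.
  set H2 := h ^+ 2 in hn h20.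
  have hn' : (n.+1)%:R * H2 <= (1024 * 1280 * C * P) * H2 by lra.
  by rewrite ler_pM2r in hn'.
rewrite /K; move: Kn; rewrite /K -/n.
rewrite -natr1; lra.
Qed.
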